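(* Let $\alpha=(\alpha^+,0,\dots,0)\in[0,\infty)^n$ with $\alpha^+\in(0,\infty)^l$, $A=\Lambda_\alpha$, and let $\Gamma_1$ (resp. $\Gamma_0$) be a circle in $\mathbb{C}$ enclosing all entries of $\alpha^+$ but not $0$ (resp. enclosing $0$ but no entry of $\alpha^+$). For Hermitian $\tilde E$ (small enough that $\Lambda_\alpha+\tilde E$ has no eigenvalue on $\Gamma_0\cup\Gamma_1$) let $P_i(\tilde E)=\frac{1}{2\pi i}\int_{\Gamma_i}(zI-(\Lambda_\alpha+\tilde E))^{-1}\,dz$, $i=0,1$. Let $Z$ be Hermitian positive semi-definite with $\operatorname{Ran}Z\subseteq\operatorname{Ker}A$, and let $b>0$ be an upper bound for both $\|\tilde E\|$ and $\|Z\|$. Then $$P_1(\tilde E)ZP_0(\tilde E)=O(b^2),\qquad P_1(\tilde E)ZP_1(\tilde E)=O(b^3),$$ where the size of the errors is locally independent of $\alpha^+$.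
   Context: $\Lambda_v$ denotes the diagonal matrix with the vector $v$ on its diagonal; $\|\cdot\|$ is any matrix norm. *)

(* Defs.v *)
From HB Require Import structures.
From mathcomp Require Import all_boot all_order all_algebra.
From mathcomp Require Import all_classical all_reals all_analysis.
From mathcomp Require Import complex.
Set Implicit Arguments. Unset Strict Implicit. Unset Printing Implicit Defensive.
Import Order.TTheory GRing.Theory Num.Theory.
Import numFieldNormedType.Exports.
Local Open Scope ring_scope.
Local Open Scope complex_scope.

Definition ctrmx (R : realType) (m n : nat) (M : 'M[R[i]]_(m, n)) : 'M[R[i]]_(n, m) :=
  \matrix_(i < n, j < m) conjc (M j i).

Definition is_hermitian (R : realType) (n : nat) (M : 'M[R[i]]_n) : Prop :=
  ctrmx M = M.

Definition hpsd (R : realType) (n : nat) (M : 'M[R[i]]_n) : Prop :=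
  is_hermitian M /\ forall v : 'cV[R[i]]_n, 0 <= (ctrmx v *m M *m v) 0 0.

(** Frobenius norm (all matrix norms are equivalent in finite dimension). *)
Definition mnorm (R : realType) (m n : nat) (M : 'M[R[i]]_(m, n)) : R :=
  Num.sqrt (\sum_(i < m) \sum_(j < n) ((complex.Re (M i j)) ^+ 2 + (complex.Im (M i j)) ^+ 2)).

Definition Lambda (R : realType) (n : nat) (v : 'I_n -> R) : 'M[R[i]]_n :=
  diag_mx (\row_j ((v j)%:C)).

Definition padz (R : realType) (l m : nat) (ap : 'I_l -> R) : 'I_(l + m) -> R :=
  fun k => match fintype.split k with inl i => ap i | inr _ => 0 end.

Definition circ (R : realType) (c : R[i]) (r : R) (t : R) : R[i] :=
  c + ((r * cos t) +i* (r * sin t)).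
Definition dcirc (R : realType) (r : R) (t : R) : R[i] :=
  (- (r * sin t)) +i* (r * cos t).

Definition cint (R : realType) (c : R[i]) (r : R) (f : R[i] -> R[i]) : R[i] :=
  let g := fun t => f (circ c r t) * dcirc r t in
  let I := (\int[@lebesgue_measure R]_(t in `[0, 2 * pi]%classic) complex.Re (g t))
           +i* (\int[@lebesgue_measure R]_(t in `[0, 2 * pi]%classic) complex.Im (g t)) in
  ((0 : R) +i* (2 * pi))^-1 * I.

Definition riesz (R : realType) (n : nat) (c : R[i]) (r : R) (M : 'M[R[i]]_n)
  : 'M[R[i]]_n :=
  \matrix_(i, j) cint c r (fun z => (invmx (z%:M - M)) i j).

Definition encloses (R : realType) (c : R[i]) (r : R) (x : R[i]) : Prop :=
  `|x - c| < r%:C.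
Definition excludes (R : realType) (c : R[i]) (r : R) (x : R[i]) : Prop :=
  r%:C < `|x - c|.
Arguments padz {R l} m ap _.

(* Main.v *)
Require Import Defs.
From HB Require Import structures.
From mathcomp Require Import all_boot all_order all_algebra.
From mathcomp Require Import all_classical all_reals all_analysis.
From mathcomp Require Import complex.
From mathcomp Require Import lra ring.
Import Order.TTheory GRing.Theory Num.Theory.
Local Open Scope ring_scope.
Local Open Scope complex_scope.


Module MA.
Set Implicit Arguments. Unset Strict Implicit. Unset Printing Implicit Defensive.
Import Order.TTheory GRing.Theory Num.Theory.
Import numFieldNormedType.Exports.
Local Open Scope ring_scope.
Local Open Scope complex_scope.

Section NC.
Variable R : realType.
Implicit Types x y z : R[i].

Definition nc z : R := Num.sqrt (complex.Re z ^+ 2 + complex.Im z ^+ 2).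
Lemma ncE z : nc z = Normc.normc z. Proof. by case: z. Qed.
Lemma nc_ge0 z : 0 <= nc z. Proof. exact: sqrtr_ge0. Qed.
Lemma ncM x y : nc (x * y) = nc x * nc y. Proof. by rewrite !ncE Normc.normcM. Qed.
Lemma ncD x y : nc (x + y) <= nc x + nc y. Proof. by rewrite !ncE; apply: le_normcD. Qed.
Lemma ncN x : nc (- x) = nc x. Proof. by rewrite !ncE; apply: normcN. Qed.
Lemma ncV x : nc (x^-1) = (nc x)^-1. Proof. by rewrite !ncE Normc.normcV. Qed.
Lemma ncR (a : R) : nc a%:C = `|a|.
Proof. by rewrite /nc /= expr0n addr0 sqrtr_sqr. Qed.
Lemma nc0 : nc 0 = 0. Proof. by rewrite (ncR 0) normr0. Qed.
Lemma normC_nc z : `|z| = (nc z)%:C. Proof. by rewrite normc_def. Qed.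
Lemma nc_Re z : `|complex.Re z| <= nc z.
Proof. by rewrite -sqrtr_sqr ler_sqrt ?lerDl ?sqr_ge0 // addr_ge0 ?sqr_ge0. Qed.
Lemma nc_Im z : `|complex.Im z| <= nc z.
Proof. by rewrite -sqrtr_sqr ler_sqrt ?lerDr ?sqr_ge0 // addr_ge0 ?sqr_ge0. Qed.
Lemma nc_eq0 z : nc z = 0 -> z = 0. Proof. by rewrite ncE; apply: Normc.eq0_normc. Qed.
Lemma ncB x y : nc (x - y) = nc (y - x). Proof. by rewrite -ncN opprB. Qed.
Lemma nc_lb x y : nc x - nc y <= nc (x - y).
Proof. by rewrite lerBlDr (le_trans _ (ncD _ _)) // subrK. Qed.
Lemma nc_sum (I : Type) (r : seq I) (P : pred I) (F : I -> R[i]) :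
  nc (\sum_(i <- r | P i) F i) <= \sum_(i <- r | P i) nc (F i).
Proof.
elim: r => [|a r IH]; first by rewrite !big_nil nc0.
rewrite !big_cons; case: (P a) => //.
by apply: le_trans (ncD _ _) _; rewrite lerD2l.
Qed.
Lemma nc_ReIm z : nc z <= `|complex.Re z| + `|complex.Im z|.
Proof.
have h : 0 <= `|complex.Re z| + `|complex.Im z| by rewrite addr_ge0.
rewrite /nc -(ger0_norm h) -sqrtr_sqr ler_sqrt ?sqr_ge0 //.
have ea : `|complex.Re z| ^+ 2 = complex.Re z ^+ 2 by apply: real_normK; apply: num_real.
have eb : `|complex.Im z| ^+ 2 = complex.Im z ^+ 2 by apply: real_normK; apply: num_real.
rewrite sqrrD ea eb.
have ht : 0 <= `|complex.Re z| * `|complex.Im z| *+ 2 by rewrite mulrn_wge0 // mulr_ge0.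
lra.
Qed.
End NC.

End MA.
Import MA.

Module MB.
Set Implicit Arguments. Unset Strict Implicit. Unset Printing Implicit Defensive.
Import Order.TTheory GRing.Theory Num.Theory.
Import numFieldNormedType.Exports.
Local Open Scope ring_scope.
Local Open Scope complex_scope.

Section MB.
Variable R : realType.
Variable n : nat.
Local Notation N := (n%:R : R).

Definition mb (X : 'M[R[i]]_n) (K : R) := forall i j, nc (X i j) <= K.

Lemma elem_le_sum (F : 'I_n -> R) i : (forall j, 0 <= F j) -> F i <= \sum_j F j.
Proof. by move=> h; rewrite (bigD1 i) //= lerDl sumr_ge0. Qed.

Lemma sum_le_const (F : 'I_n -> R) c : (forall j, F j <= c) -> \sum_j F j <= N * c.
Proof.
move=> h; apply: le_trans (ler_sum _ (fun j _ => h j)) _.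
by rewrite sumr_const card_ord mulr_natl.
Qed.

Lemma mb_mulG (X Y : 'M[R[i]]_n) i k c :
  (forall j, nc (X i j) * nc (Y j k) <= c) -> nc ((X *m Y) i k) <= N * c.
Proof.
move=> h; rewrite mxE; apply: le_trans (nc_sum _ _ _) _.
by apply: sum_le_const => j; rewrite ncM.
Qed.

Lemma mb_mul (X Y : 'M[R[i]]_n) a b : 0 <= b -> mb X a -> mb Y b -> mb (X *m Y) (N * (a * b)).
Proof.
move=> b0 hX hY i k; apply: mb_mulG => j.
by apply: ler_pM => //; apply: nc_ge0.
Qed.

Lemma resolvent_bound (D E Rs : 'M[R[i]]_n) dinv b :
  0 <= dinv -> 0 <= b -> mb D dinv -> mb E b -> N ^+ 4 * b * dinv <= 1/2 ->
  Rs = D + D *m E *m Rs -> mb Rs (2 * (N ^+ 2 * dinv)).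
Proof.
move=> d0 b0 hD hE hsmall eR.
pose K := \sum_i \sum_j nc (Rs i j).
have K0 : 0 <= K by apply: sumr_ge0 => i _; apply: sumr_ge0 => j _; apply: nc_ge0.
have hK : mb Rs K.
  move=> i j.
  have h1 := elem_le_sum (F := fun j => nc (Rs i j)) j (fun _ => nc_ge0 _).
  apply: le_trans h1 _.
  apply: (elem_le_sum (F := fun i => \sum_j nc (Rs i j)) i).
  by move=> ?; apply: sumr_ge0 => ? _; apply: nc_ge0.
have hDE := mb_mul b0 hD hE.
have hDER := mb_mul K0 hDE hK.
have hR : mb Rs (dinv + N * (N * (dinv * b) * K)).
  move=> i j; rewrite eR mxE; apply: le_trans (ncD _ _) _.
  by apply: lerD.
have hK2 : K <= N * (N * (dinv + N * (N * (dinv * b) * K))).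
  by apply: sum_le_const => i; apply: sum_le_const => j; apply: hR.
have e1 : N * (N * (dinv + N * (N * (dinv * b) * K))) = N ^+ 2 * dinv + (N ^+ 4 * b * dinv) * K.
  by ring.
have e2 : (N ^+ 4 * b * dinv) * K <= 1/2 * K by apply: ler_wpM2r.
have : K <= 2 * (N ^+ 2 * dinv) by rewrite e1 in hK2; lra.
by move=> hK3 i j; apply: le_trans (hK i j) hK3.
Qed.

End MB.

End MB.
Import MB.

Module MC.
Set Implicit Arguments. Unset Strict Implicit. Unset Printing Implicit Defensive.
Import Order.TTheory GRing.Theory Num.Theory.
Import numFieldNormedType.Exports.
Local Open Scope ring_scope.
Local Open Scope complex_scope.

Section CC.
Variable R : realType.
Implicit Types (h g : R -> R[i]).

Lemma cReD (x y : R[i]) : complex.Re (x + y) = complex.Re x + complex.Re y.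
Proof. by case: x; case: y. Qed.
Lemma cImD (x y : R[i]) : complex.Im (x + y) = complex.Im x + complex.Im y.
Proof. by case: x; case: y. Qed.
Lemma cReN (x : R[i]) : complex.Re (- x) = - complex.Re x.
Proof. by case: x. Qed.
Lemma cImN (x : R[i]) : complex.Im (- x) = - complex.Im x.
Proof. by case: x. Qed.
Lemma cReM (x y : R[i]) : complex.Re (x * y) = complex.Re x * complex.Re y - complex.Im x * complex.Im y.
Proof. by case: x; case: y. Qed.
Lemma cImM (x y : R[i]) : complex.Im (x * y) = complex.Re x * complex.Im y + complex.Im x * complex.Re y.
Proof. by case: x => a b; case: y => c d /=; ring. Qed.
Lemma cReV (x : R[i]) : complex.Re (x^-1) = complex.Re x / (complex.Re x ^+ 2 + complex.Im x ^+ 2).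
Proof. by case: x. Qed.
Lemma cImV (x : R[i]) : complex.Im (x^-1) = - (complex.Im x / (complex.Re x ^+ 2 + complex.Im x ^+ 2)).
Proof. by case: x. Qed.

Definition cc h := continuous (fun t => complex.Re (h t)) /\ continuous (fun t => complex.Im (h t)).

Lemma cc_cst (c : R[i]) : cc (fun _ => c).
Proof. by split=> t; apply: cst_continuous. Qed.

Lemma cc_add h g : cc h -> cc g -> cc (fun t => h t + g t).
Proof.
move=> [h1 h2] [g1 g2]; split=> t.
  by rewrite (funext (fun t => cReD (h t) (g t))); apply: continuousD; [apply: h1|apply: g1].
by rewrite (funext (fun t => cImD (h t) (g t))); apply: continuousD; [apply: h2|apply: g2].
Qed.

Lemma cc_opp h : cc h -> cc (fun t => - h t).
Proof.
move=> [h1 h2]; split=> t.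
  by rewrite (funext (fun t => cReN (h t))); apply: continuousN; apply: h1.
by rewrite (funext (fun t => cImN (h t))); apply: continuousN; apply: h2.
Qed.

Lemma cc_sub h g : cc h -> cc g -> cc (fun t => h t - g t).
Proof. by move=> ? ?; apply: cc_add => //; apply: cc_opp. Qed.

Lemma cc_mul h g : cc h -> cc g -> cc (fun t => h t * g t).
Proof.
move=> [h1 h2] [g1 g2]; split=> t.
  rewrite (funext (fun t => cReM (h t) (g t))).
  apply: (@continuousD _ _ _ (fun t => complex.Re (h t) * complex.Re (g t)) (fun t => - (complex.Im (h t) * complex.Im (g t)))).
  by apply: continuousM; [apply: h1|apply: g1].
  by apply: continuousN; apply: continuousM; [apply: h2|apply: g2].
rewrite (funext (fun t => cImM (h t) (g t))).
apply: (@continuousD _ _ _ (fun t => complex.Re (h t) * complex.Im (g t)) (fun t => complex.Im (h t) * complex.Re (g t))).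
  by apply: continuousM; [apply: h1|apply: g2].
by apply: continuousM; [apply: h2|apply: g1].
Qed.

Lemma cc_inv h : (forall t, h t != 0) -> cc h -> cc (fun t => (h t)^-1).
Proof.
move=> nz [h1 h2].
have den : forall t, complex.Re (h t) ^+ 2 + complex.Im (h t) ^+ 2 != 0.
  move=> t; apply/negP => /eqP e; move/negP: (nz t); apply.
  have : nc (h t) = 0 by rewrite /nc e sqrtr0.
  by move/nc_eq0 ->.
have cden : continuous (fun t => complex.Re (h t) ^+ 2 + complex.Im (h t) ^+ 2).
  move=> t; apply: (@continuousD _ _ _ (fun t => complex.Re (h t) ^+ 2) (fun t => complex.Im (h t) ^+ 2)).
    by rewrite (funext (fun t => expr2 (complex.Re (h t)))); apply: continuousM; apply: h1.
  by rewrite (funext (fun t => expr2 (complex.Im (h t)))); apply: continuousM; apply: h2.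
split=> t.
  rewrite (funext (fun t => cReV (h t))).
  apply: (@continuousM _ _ (fun t => complex.Re (h t)) (fun t => (complex.Re (h t) ^+ 2 + complex.Im (h t) ^+ 2)^-1)); first by apply: h1.
  by apply: continuousV => //; apply: cden.
rewrite (funext (fun t => cImV (h t))).
apply: (@continuousN _ _ _ (fun t => complex.Im (h t) / (complex.Re (h t) ^+ 2 + complex.Im (h t) ^+ 2))).
apply: (@continuousM _ _ (fun t => complex.Im (h t)) (fun t => (complex.Re (h t) ^+ 2 + complex.Im (h t) ^+ 2)^-1)); first by apply: h2.
by apply: continuousV => //; apply: cden.
Qed.

Lemma cc_sum (I : Type) (r : seq I) (P : pred I) (F : I -> R -> R[i]) :
  (forall i, P i -> cc (F i)) -> cc (fun t => \sum_(i <- r | P i) F i t).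
Proof.
move=> hF; elim: r => [|a r IH].
  by under eq_fun do rewrite big_nil; apply: cc_cst.
case Pa: (P a).
  under eq_fun do rewrite big_cons Pa.
  by apply: cc_add => //; apply: hF.
by under eq_fun do rewrite big_cons Pa.
Qed.

Lemma cc_prod (I : Type) (r : seq I) (P : pred I) (F : I -> R -> R[i]) :
  (forall i, P i -> cc (F i)) -> cc (fun t => \prod_(i <- r | P i) F i t).
Proof.
move=> hF; elim: r => [|a r IH].
  by under eq_fun do rewrite big_nil; apply: cc_cst.
case Pa: (P a).
  under eq_fun do rewrite big_cons Pa.
  by apply: cc_mul => //; apply: hF.
by under eq_fun do rewrite big_cons Pa.
Qed.

Lemma cc_real (f : R -> R) : continuous f -> cc (fun t => (f t)%:C).
Proof. by move=> hf; split=> t //=; apply: cst_continuous. Qed.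

Lemma cc_circ (c : R[i]) (r : R) : cc (circ c r).
Proof.
rewrite /circ; apply: cc_add; first exact: cc_cst.
split=> t /=.
  by apply: continuousM; [apply: cst_continuous | apply: continuous_cos].
by apply: continuousM; [apply: cst_continuous | apply: continuous_sin].
Qed.

Lemma cc_dcirc (r : R) : cc (dcirc r).
Proof.
rewrite /dcirc; split=> t /=.
  apply: (@continuousN _ _ _ (fun t => r * sin t)).
  by apply: continuousM; [apply: cst_continuous | apply: continuous_sin].
by apply: continuousM; [apply: cst_continuous | apply: continuous_cos].
Qed.

End CC.

End MC.
Import MC.

Module MD.
Set Implicit Arguments. Unset Strict Implicit. Unset Printing Implicit Defensive.
Import Order.TTheory GRing.Theory Num.Theory.
Import numFieldNormedType.Exports.
Local Open Scope ring_scope.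
Local Open Scope complex_scope.

Section D.
Variable R : realType.
Local Notation mu := (@lebesgue_measure R).
Local Notation I := (`[0, 2 * pi]%classic : set R).

Lemma int_cont (f : R -> R) : continuous f -> mu.-integrable I (EFin \o f).
Proof.
move=> cf; apply: continuous_compact_integrable; first exact: segment_compact.
exact: continuous_subspaceT.
Qed.

Lemma mI : measurable I. Proof. exact: measurable_itv. Qed.

Lemma muI : fine (mu I) = 2 * pi.
Proof.
rewrite lebesgue_measure_itv /= ifT.
  by rewrite /= oppr0 addr0.
by rewrite lte_fin mulr_gt0 // pi_gt0.
Qed.

Lemma ReDl (a b d : R[i]) : complex.Re ((a + b) * d) = complex.Re (a * d) + complex.Re (b * d).
Proof. by rewrite mulrDl cReD. Qed.
Lemma ImDl (a b d : R[i]) : complex.Im ((a + b) * d) = complex.Im (a * d) + complex.Im (b * d).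
Proof. by rewrite mulrDl cImD. Qed.

Definition cig (c : R[i]) (r : R) (f : R[i] -> R[i]) t := f (circ c r t) * dcirc r t.

Lemma cint_add (c : R[i]) (r : R) f1 f2 : cc (cig c r f1) -> cc (cig c r f2) ->
  cint c r (fun z => f1 z + f2 z) = cint c r f1 + cint c r f2.
Proof.
move=> [h1 h2] [g1 g2]; rewrite /cint -mulrDr; congr (_ * _).
rewrite (@eq_Rintegral _ _ _ mu _ (fun t => complex.Re (cig c r f1 t) + complex.Re (cig c r f2 t))); last first.
  by move=> t _; exact: ReDl.
rewrite [X in _ +i* X](@eq_Rintegral _ _ _ mu _ (fun t => complex.Im (cig c r f1 t) + complex.Im (cig c r f2 t))); last first.
  by move=> t _; exact: ImDl.
rewrite !RintegralD //; try (apply: int_cont; assumption); try exact: mI.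
Qed.

Lemma Rint0 (f : R -> R) : (forall t, f t = 0) -> \int[mu]_(t in I) f t = 0.
Proof.
move=> h; rewrite (@eq_Rintegral _ _ _ mu _ (fun _ => 0)); last by move=> t _; rewrite h.
by rewrite Rintegral_cst ?mul0r //; exact: mI.
Qed.

Lemma cint_zero (c : R[i]) (r : R) : cint c r (fun _ => 0) = 0.
Proof.
rewrite /cint !Rint0 ?mulr0 // => t; by rewrite mul0r.
Qed.

Lemma nc_dcirc (r t : R) : 0 <= r -> nc (dcirc r t) = r.
Proof.
move=> r0; rewrite /nc /dcirc /= sqrrN !exprMn -mulrDr addrC cos2Dsin2 mulr1.
by rewrite sqrtr_sqr ger0_norm.
Qed.

Lemma Rint_bound (f : R -> R) K : continuous f -> (forall t, `|f t| <= K) ->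
  `|\int[mu]_(t in I) f t| <= K * (2 * pi).
Proof.
move=> cf hK.
apply: le_trans (@le_normr_Rintegral _ _ _ mu I f mI (int_cont cf)) _.
have cnf : continuous (fun t => `|f t|).
  by move=> t; apply: continuous_comp; [apply: cf | apply: norm_continuous].
have cK : continuous (fun _ : R => K) by move=> t; apply: cst_continuous.
have := @le_Rintegral _ _ _ mu I (fun t => `|f t|) (fun _ => K) mI (int_cont cnf) (int_cont cK) (fun t _ => hK t).
move=> h; apply: le_trans h _.
by rewrite Rintegral_cst ?muI //; exact: mI.
Qed.

Lemma cint_bound (c : R[i]) (r : R) f K : 0 <= r -> cc (cig c r f) ->
  (forall t, nc (f (circ c r t)) <= K) -> nc (cint c r f) <= 2 * (r * K).
Proof.
move=> r0 [h1 h2] hK.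
have hb : forall t, nc (cig c r f t) <= K * r.
  by move=> t; rewrite /cig ncM nc_dcirc // ler_wpM2r.
have b1 := Rint_bound h1 (fun t => le_trans (nc_Re _) (hb t)).
have b2 := Rint_bound h2 (fun t => le_trans (nc_Im _) (hb t)).
rewrite /cint ncM ncV.
have -> : nc ((0:R) +i* (2 * pi)) = 2 * pi.
  by rewrite /nc /= expr0n add0r sqrtr_sqr ger0_norm // mulr_ge0 // pi_ge0.
set J := (_ +i* _).
have hJ : nc J <= 2 * (K * r * (2 * pi)).
  apply: le_trans (nc_ReIm _) _; rewrite /J /=; lra.
have p0 : (0:R) < 2 * pi by apply: mulr_gt0 => //; apply: pi_gt0.
rewrite ler_pdivrMl //.
apply: le_trans hJ _; rewrite le_eqVlt; apply/orP; left; apply/eqP; ring.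
Qed.

End D.

End MD.
Import MD.

Module ME.
Set Implicit Arguments. Unset Strict Implicit. Unset Printing Implicit Defensive.
Import Order.TTheory GRing.Theory Num.Theory.
Import numFieldNormedType.Exports.
Local Open Scope ring_scope.

Section E.
Variable R : realType.
Local Notation mu := (@lebesgue_measure R).
Local Notation I := (`[0, 2 * pi]%classic : set R).
Implicit Types (f g F : R -> R) (x : R).

Lemma exd f x df : is_derive x 1 f df -> derivable f x 1.
Proof. by move=> h; apply: ex_derive. Qed.

Lemma dD f g x df dg : is_derive x 1 f df -> is_derive x 1 g dg ->
  is_derive x 1 (fun t => f t + g t) (df + dg).
Proof. by move=> h1 h2; exact: is_deriveD. Qed.

Lemma dN f x df : is_derive x 1 f df -> is_derive x 1 (fun t => - f t) (- df).
Proof. by move=> h1; exact: is_deriveN. Qed.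

Lemma dM f g x df dg : is_derive x 1 f df -> is_derive x 1 g dg ->
  is_derive x 1 (fun t => f t * g t) (f x * dg + g x * df).
Proof. by move=> h1 h2; have := is_deriveM h1 h2. Qed.

Lemma dC (k : R) x : is_derive x 1 (fun _ => k) 0.
Proof. exact: is_derive_cst. Qed.

Lemma dId x : is_derive x 1 (fun t : R => t) 1.
Proof. exact: is_derive_id. Qed.

Lemma dcomp f g x df dg : is_derive x 1 f df -> is_derive (f x) 1 g dg ->
  is_derive x 1 (fun t => g (f t)) (dg * df).
Proof.
move=> h1 h2; apply: DeriveDef.
  apply/derivable1_diffP; apply: (@differentiable_comp _ _ _ _ f g).
    by apply/derivable1_diffP; apply: exd h1.
  by apply/derivable1_diffP; apply: exd h2.
rewrite -derive1E (@derive1_comp _ f g x); last 2 first.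
- exact: exd h1.
- exact: exd h2.
by rewrite !derive1E !derive_val.
Qed.

Lemma dcos x : is_derive x 1 (@cos R) (- sin x).
Proof. exact: is_derive_cos. Qed.
Lemma dsin x : is_derive x 1 (@sin R) (cos x).
Proof. exact: is_derive_sin. Qed.

Lemma dln f x df : 0 < f x -> is_derive x 1 f df -> is_derive x 1 (fun t => ln (f t)) ((f x)^-1 * df).
Proof. by move=> h0 h1; apply: dcomp h1 _; apply: is_derive1_ln. Qed.

Lemma datan f x df : is_derive x 1 f df -> is_derive x 1 (fun t => atan (f t)) ((1 + f x ^+ 2)^-1 * df).
Proof. by move=> h1; apply: dcomp h1 _; apply: is_derive1_atan. Qed.

Lemma dV f x df : f x != 0 -> is_derive x 1 f df -> is_derive x 1 (fun t => (f t)^-1) (- (f x) ^- 2 * df).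
Proof.
move=> h0 h1; apply: DeriveDef.
  by apply: derivableV => //; apply: exd h1.
rewrite deriveV //.
by rewrite derive_val.
Qed.

Lemma ftc_zero f F : (forall x, is_derive x 1 F (f x)) -> continuous f ->
  F (2 * pi) = F 0 -> \int[mu]_(t in I) f t = 0.
Proof.
move=> dF cf per.
have p0 : (0:R) < 2 * pi by apply: mulr_gt0 => //; apply: pi_gt0.
have cF : continuous F.
  move=> x; apply: differentiable_continuous; apply/derivable1_diffP.
  exact: exd (dF x).
have hd : derivable_oo_LRcontinuous F 0 (2 * pi).
  split.
  - by move=> x _; apply: exd (dF x).
  - by apply: cvg_at_right_filter; apply: cF.
  - by apply: cvg_at_left_filter; apply: cF.
have F'f : {in `]0, 2 * pi[, F^`()%classic =1 f}.
  by move=> x _; rewrite derive1E derive_val.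
have h := @continuous_FTC2 R f F 0 (2 * pi) p0 (continuous_subspaceT cf) hd F'f.
by rewrite /Rintegral h per /= subrr.
Qed.

End E.

End ME.
Import ME.

Module MF.
Set Implicit Arguments. Unset Strict Implicit. Unset Printing Implicit Defensive.
Import Order.TTheory GRing.Theory Num.Theory.
Import numFieldNormedType.Exports.
Local Open Scope ring_scope.

Section F.
Variable R : realType.
Local Notation mu := (@lebesgue_measure R).
Local Notation I := (`[0, 2 * pi]%classic : set R).

Lemma cint_eq0 (c : R[i]) (r : R) f :
  \int[mu]_(t in I) complex.Re (f (circ c r t) * dcirc r t) = 0 ->
  \int[mu]_(t in I) complex.Im (f (circ c r t) * dcirc r t) = 0 ->
  cint c r f = 0.
Proof. by move=> h1 h2; rewrite /cint h1 h2 mulr0. Qed.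

Lemma id_cs (a b c d : R) : (a ^+ 2 + b ^+ 2) * (c ^+ 2 + d ^+ 2) - (a * c + b * d) ^+ 2 = (a * d - b * c) ^+ 2.
Proof. ring. Qed.

Variables (a b r : R).
Hypothesis r0 : 0 < r.
Hypothesis rc : r < nc (a +i* b)%C.

Definition P (t : R) := a + r * cos t.
Definition Q (t : R) := b + r * sin t.
Definition Nn (t : R) := P t * P t + Q t * Q t.
Definition X (t : R) := a * P t + b * Q t.
Definition Y (t : R) := a * Q t - b * P t.

Lemma dP (x : R) : is_derive x 1 P (- (r * sin x)).
Proof.
apply: is_derive_eq; rewrite /P.
by rewrite /GRing.scale /=; ring.
Qed.

Lemma dQ (x : R) : is_derive x 1 Q (r * cos x).
Proof.
apply: is_derive_eq; rewrite /Q.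
by rewrite /GRing.scale /=; ring.
Qed.

Let s := a ^+ 2 + b ^+ 2.
Let sg := nc (a +i* b)%C.
Lemma sgE : sg ^+ 2 = s.
Proof. by rewrite /sg /nc sqr_sqrtr // addr_ge0 // sqr_ge0. Qed.
Lemma sg_ge0 : 0 <= sg. Proof. exact: nc_ge0. Qed.

Lemma wbound (t : R) : (a * cos t + b * sin t) ^+ 2 <= s.
Proof.
have e : s - (a * cos t + b * sin t) ^+ 2 = (a * sin t - b * cos t) ^+ 2.
  by have := id_cs a b (cos t) (sin t); rewrite cos2Dsin2 mulr1.
by rewrite -subr_ge0 e sqr_ge0.
Qed.

Lemma Nn_gt0 (t : R) : 0 < Nn t.
Proof.
have w := wbound t; have e := sgE; have g := sg_ge0.
have -> : Nn t = s + r ^+ 2 * (cos t ^+ 2 + sin t ^+ 2) + 2 * r * (a * cos t + b * sin t).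
  by rewrite /Nn /P /Q /s; ring.
rewrite cos2Dsin2 mulr1.
set w0 := a * cos t + b * sin t in w *.
rewrite -e in w *.
have hw : - sg <= w0 by nra.
have rs : r < sg := rc.
have h1 : 0 <= r * (w0 + sg) by apply: mulr_ge0; [exact: ltW r0 | lra].
have h2 : 0 < (sg - r) ^+ 2 by apply: exprn_gt0; rewrite subr_gt0.
nra.
Qed.

Lemma X_gt0 (t : R) : 0 < X t.
Proof.
have w := wbound t; have e := sgE; have g := sg_ge0.
have -> : X t = s + r * (a * cos t + b * sin t).
  by rewrite /X /P /Q /s; ring.
set w0 := a * cos t + b * sin t in w *.
rewrite -e in w *.
have hw : - sg <= w0 by nra.
have rs : r < sg := rc.
have h1 : 0 <= r * (w0 + sg) by apply: mulr_ge0; [exact: ltW r0 | lra].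
have h2 : 0 < sg * (sg - r) by apply: mulr_gt0; [apply: lt_trans r0 rs | rewrite subr_gt0].
nra.
Qed.

Lemma s_gt0 : 0 < s.
Proof. rewrite -sgE; have rs : r < sg := rc; apply: exprn_gt0; exact: lt_trans r0 rs. Qed.

Lemma circE (t : R) : circ (a +i* b)%C r t = (P t +i* Q t)%C.
Proof. by []. Qed.

Lemma circ_neq0 (t : R) : circ (a +i* b)%C r t != 0.
Proof.
rewrite circE; apply/negP => /eqP [] hp hq.
by have := Nn_gt0 t; rewrite /Nn hp hq mulr0 addr0 ltxx.
Qed.

Lemma ReG (t : R) : complex.Re ((circ (a +i* b)%C r t)^-1 * dcirc r t) =
  (P t * (- (r * sin t)) + Q t * (r * cos t)) / Nn t.
Proof.
have := Nn_gt0 t; rewrite circE cReM cReV cImV /= /Nn => h.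
have h' : P t ^+ 2 + Q t ^+ 2 != 0 by rewrite !expr2 gt_eqF.
by field.
Qed.

Lemma ImG (t : R) : complex.Im ((circ (a +i* b)%C r t)^-1 * dcirc r t) =
  (P t * (r * cos t) - Q t * (- (r * sin t))) / Nn t.
Proof.
have := Nn_gt0 t; rewrite circE cImM cReV cImV /= /Nn => h.
have h' : P t ^+ 2 + Q t ^+ 2 != 0 by rewrite !expr2 gt_eqF.
by field.
Qed.

Definition F1 (t : R) := ln (Nn t) * 2^-1.
Definition F2 (t : R) := atan (Y t * (X t)^-1).

Lemma dNn (x : R) : is_derive x 1 Nn (P x * - (r * sin x) + P x * - (r * sin x) + (Q x * (r * cos x) + Q x * (r * cos x))).
Proof. exact: (dD (dM (dP x) (dP x)) (dM (dQ x) (dQ x))). Qed.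

Lemma dF1 (x : R) : is_derive x 1 F1 (complex.Re ((circ (a +i* b)%C r x)^-1 * dcirc r x)).
Proof.
have h := dM (dln (Nn_gt0 x) (dNn x)) (dC (2^-1) x).
apply: is_derive_eq.
rewrite ReG.
have := Nn_gt0 x => hN.
have hN' : Nn x != 0 by rewrite gt_eqF.
by field.
Qed.

Lemma dX (x : R) : is_derive x 1 X (a * - (r * sin x) + b * (r * cos x)).
Proof.
have h := dD (dM (dC a x) (dP x)) (dM (dC b x) (dQ x)); apply: is_derive_eq.
by ring.
Qed.

Lemma dY (x : R) : is_derive x 1 Y (a * (r * cos x) - b * - (r * sin x)).
Proof.
have h := dD (dM (dC a x) (dQ x)) (dN (dM (dC b x) (dP x))); apply: is_derive_eq.
by ring.
Qed.

Lemma dF2 (x : R) : is_derive x 1 F2 (complex.Im ((circ (a +i* b)%C r x)^-1 * dcirc r x)).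
Proof.
have hX := X_gt0 x; have hX' : X x != 0 by rewrite gt_eqF.
have h := datan (dM (dY x) (dV hX' (dX x))).
apply: is_derive_eq.
rewrite ImG.
have := Nn_gt0 x => hN.
have hN' : Nn x != 0 by rewrite gt_eqF.
have hs : s != 0 by rewrite gt_eqF // s_gt0.
have hXY : X x ^+ 2 + Y x ^+ 2 = s * Nn x by rewrite /X /Y /Nn /s; ring.
have h1 : 1 + (Y x * (X x)^-1) ^+ 2 = s * Nn x / X x ^+ 2.
  by rewrite -hXY; field.
rewrite h1.
have hX2 : X x ^+ 2 != 0 by rewrite expf_neq0.
rewrite /X /Y /Nn /s in hX' hN' hs hX2 *.
by field; rewrite hN' hX' hs.
Qed.

Lemma cos2pi' : cos (2 * pi) = cos (0 : R).
Proof. rewrite (_ : 2 * pi = pi *+ 2); last by rewrite mulr2n; ring. by rewrite cos2pi cos0. Qed.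
Lemma sin2pi' : sin (2 * pi) = sin (0 : R).
Proof. rewrite (_ : 2 * pi = pi *+ 2); last by rewrite mulr2n; ring. by rewrite sin2pi sin0. Qed.

Lemma cint_inv0 : cint (a +i* b)%C r (fun z => z^-1) = 0.
Proof.
have cg := cc_mul (cc_inv circ_neq0 (cc_circ (a +i* b)%C r)) (cc_dcirc r).
apply: cint_eq0.
  apply: (@ftc_zero _ (fun t => complex.Re ((circ (a +i* b)%C r t)^-1 * dcirc r t)) F1).
  - exact: dF1.
  - exact: cg.1.
  - by rewrite /F1 /Nn /P /Q cos2pi' sin2pi'.
apply: (@ftc_zero _ (fun t => complex.Im ((circ (a +i* b)%C r t)^-1 * dcirc r t)) F2).
- exact: dF2.
- exact: cg.2.
- by rewrite /F2 /X /Y /P /Q cos2pi' sin2pi'.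
Qed.

End F.

End MF.
Import MF.

Module MG.
Set Implicit Arguments. Unset Strict Implicit. Unset Printing Implicit Defensive.
Import Order.TTheory GRing.Theory Num.Theory.
Import numFieldNormedType.Exports.
Local Open Scope ring_scope.
Local Open Scope complex_scope.

Section G.
Variable R : realType.
Variable n : nat.
Implicit Types (M E : 'M[R[i]]_n) (z : R[i]) (v : 'I_n -> R).

Lemma unit_of_noteig M z : ~~ eigenvalue M z -> (z%:M - M) \in unitmx.
Proof.
move=> h.
have : (M - z%:M) \in unitmx.
  by rewrite -row_free_unit -kermx_eq0; move: h; rewrite /eigenvalue /eigenspace negbK.
have -> : z%:M - M = (-1) *: (M - z%:M) by rewrite scaleN1r opprB.
by rewrite unitmxZ // unitrN1.
Qed.

Definition Dm v z : 'M[R[i]]_n := diag_mx (\row_j (z - (v j)%:C)^-1).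

Lemma Dm_mull v z : (forall j, z != (v j)%:C) -> Dm v z *m (z%:M - Lambda v) = 1%:M.
Proof.
move=> h; apply/matrixP => i j; rewrite mul_diag_mx !mxE.
case: eqP => [e|ne]; last by rewrite !mulr0n subrr mulr0.
by rewrite !mulr1n mulVf // subr_eq0.
Qed.

Lemma Dm_mulr v z : (forall j, z != (v j)%:C) -> (z%:M - Lambda v) *m Dm v z = 1%:M.
Proof.
move=> h; apply/matrixP => i j; rewrite mul_mx_diag !mxE.
case: eqP => [e|ne]; last by rewrite !mulr0n subrr mul0r.
by rewrite !mulr1n e mulfV // subr_eq0.
Qed.

Lemma resolvL v E z : (forall j, z != (v j)%:C) -> (z%:M - (Lambda v + E)) \in unitmx ->
  invmx (z%:M - (Lambda v + E)) = Dm v z + Dm v z *m E *m invmx (z%:M - (Lambda v + E)).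
Proof.
move=> h hu; set Rz := invmx _.
have e1 : (z%:M - Lambda v) = (z%:M - (Lambda v + E)) + E by rewrite opprD addrA subrK.
rewrite -{1}[Rz]mul1mx -(Dm_mull h) e1 -[LHS]mulmxA mulmxDl mulmxV // mulmxDr mulmx1 mulmxA.
done.
Qed.

Lemma resolvR v E z : (forall j, z != (v j)%:C) -> (z%:M - (Lambda v + E)) \in unitmx ->
  invmx (z%:M - (Lambda v + E)) = Dm v z + invmx (z%:M - (Lambda v + E)) *m E *m Dm v z.
Proof.
move=> h hu; set Rz := invmx _.
have e1 : (z%:M - Lambda v) = (z%:M - (Lambda v + E)) + E by rewrite opprD addrA subrK.
rewrite -{1}[Rz]mulmx1 -(Dm_mulr h) mulmxA e1 mulmxDr mulVmx // mulmxDl mul1mx.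
done.
Qed.

Lemma mb_Dm v z d : 0 < d -> (forall j, d <= nc (z - (v j)%:C)) -> mb (Dm v z) d^-1.
Proof.
move=> d0 h i j; rewrite !mxE.
case: eqP => [e|ne]; last by rewrite mulr0n nc0 invr_ge0 ltW.
rewrite mulr1n ncV lef_pV2 // ?posrE //.
exact: lt_le_trans d0 (h i).
Qed.

Lemma nc_le_mnorm E i j : nc (E i j) <= mnorm E.
Proof.
rewrite /nc /mnorm ler_sqrt; last first.
  by apply: sumr_ge0 => ? _; apply: sumr_ge0 => ? _; apply: addr_ge0; apply: sqr_ge0.
have h1 := @elem_le_sum R n (fun j => complex.Re (E i j) ^+ 2 + complex.Im (E i j) ^+ 2) j
  (fun _ => addr_ge0 (sqr_ge0 _) (sqr_ge0 _)).
apply: le_trans h1 _.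
apply: (@elem_le_sum R n (fun i => \sum_j (complex.Re (E i j) ^+ 2 + complex.Im (E i j) ^+ 2)) i).
by move=> ?; apply: sumr_ge0 => ? _; apply: addr_ge0; apply: sqr_ge0.
Qed.

Lemma mb_mnorm E b : mnorm E <= b -> mb E b.
Proof. by move=> h i j; apply: le_trans (nc_le_mnorm E i j) h. Qed.

Lemma cc_det k (H : R -> 'M[R[i]]_k) : (forall i j, cc (fun t => H t i j)) -> cc (fun t => \det (H t)).
Proof.
move=> h; rewrite /determinant.
apply: cc_sum => s _; apply: cc_mul; first exact: cc_cst.
by apply: cc_prod => i _; apply: h.
Qed.

Lemma cc_invmx (H : R -> 'M[R[i]]_n) : (forall t, H t \in unitmx) ->
  (forall i j, cc (fun t => H t i j)) -> forall i j, cc (fun t => invmx (H t) i j).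
Proof.
move=> hu h i j.
have e : (fun t => invmx (H t) i j) = (fun t => (\det (H t))^-1 * \adj (H t) i j).
  by apply: funext => t; rewrite /invmx hu !mxE.
rewrite e; apply: cc_mul.
  apply: cc_inv; last exact: cc_det.
  by move=> t; have := hu t; rewrite unitmxE unitfE.
under eq_fun do rewrite mxE.
rewrite /cofactor; apply: cc_mul; first exact: cc_cst.
apply: cc_det => i' j'.
under eq_fun do rewrite !mxE.
exact: h.
Qed.

End G.

End MG.
Import MG.

Module MH.
Set Implicit Arguments. Unset Strict Implicit. Unset Printing Implicit Defensive.
Import Order.TTheory GRing.Theory Num.Theory.
Import numFieldNormedType.Exports.
Local Open Scope ring_scope.
Local Open Scope complex_scope.

Section H.
Variable R : realType.

Lemma cint_inv0' (c : R[i]) (r : R) : 0 < r -> r < nc c -> cint c r (fun z => z^-1) = 0.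
Proof. by case: c => a b; apply: cint_inv0. Qed.

Lemma cint_ext (c : R[i]) (r : R) f g : (forall z, f z = g z) -> cint c r f = cint c r g.
Proof. by move=> h; rewrite (funext h). Qed.

Lemma circ_sub (c : R[i]) (r t : R) : circ c r t - c = (r * cos t) +i* (r * sin t).
Proof. by rewrite /circ addrC addKr. Qed.

Lemma nc_circ (c : R[i]) (r t : R) : 0 <= r -> nc (circ c r t - c) = r.
Proof.
move=> r0; rewrite circ_sub /nc /= !exprMn -mulrDr cos2Dsin2 mulr1.
by rewrite sqrtr_sqr ger0_norm.
Qed.

Lemma circ_on (c : R[i]) (r t : R) : 0 <= r -> `|circ c r t - c| = r%:C.
Proof. by move=> r0; rewrite normC_nc nc_circ. Qed.

Lemma cc_scal (f : R -> R[i]) (b : bool) : cc f -> cc (fun t => f t *+ b).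
Proof.
by case: b => h; [under eq_fun do rewrite mulr1n | under eq_fun do rewrite mulr0n; apply: cc_cst].
Qed.

Variable n : nat.
Local Notation N := (n%:R : R).

Lemma riesz_bounds (v : 'I_n -> R) (E : 'M[R[i]]_n) (c : R[i]) (r d b : R) :
  0 < r -> 0 < d -> 0 <= b -> mnorm E <= b -> N ^+ 4 * b * d^-1 <= 1/2 ->
  (forall t j, d <= nc (circ c r t - (v j)%:C)) ->
  (forall t, (circ c r t)%:M - (Lambda v + E) \in unitmx) ->
  (forall i j, nc (riesz c r (Lambda v + E) i j) <= 2 * (r * (2 * (N ^+ 2 * d^-1))))
  /\
  (forall i j, (v j = 0 \/ v i = 0) -> r < nc c ->
     nc (riesz c r (Lambda v + E) i j) <= 2 * (r * (N * (N * (d^-1 * b) * (2 * (N ^+ 2 * d^-1)))))).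
Proof.
move=> r0 d0 b0 hE hsmall hd hu.
set KR := 2 * (N ^+ 2 * d^-1).
set M := Lambda v + E.
have dinv0 : 0 <= d^-1 by rewrite invr_ge0 ltW.
have hEb := mb_mnorm hE.
have neq (t : R) j : circ c r t != (v j)%:C.
  apply/negP => /eqP e; have := hd t j; rewrite e subrr nc0 => h.
  by move: (lt_le_trans d0 h); rewrite ltxx.
have hDm (t : R) : mb (Dm v (circ c r t)) d^-1 by apply: mb_Dm => // j; apply: hd.
have hR (t : R) : mb (invmx ((circ c r t)%:M - M)) KR.
  apply: (@resolvent_bound R n (Dm v (circ c r t)) E _ d^-1 b) => //.
  exact: resolvL.
have cM : forall i j, cc (fun t => invmx ((circ c r t)%:M - M) i j).
  apply: (@cc_invmx R n (fun t => (circ c r t)%:M - M)) => // i j.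
  under eq_fun do rewrite !mxE.
  apply: cc_sub; last exact: cc_cst.
  by apply: cc_scal; apply: cc_circ.
have cf : forall i j, cc (cig c r (fun z => invmx (z%:M - M) i j)).
  by move=> i j; apply: cc_mul; [apply: cM | apply: cc_dcirc].
split.
  move=> i j; rewrite mxE; apply: cint_bound; [exact: ltW | exact: cf |] => t.
  exact: hR.
move=> i j hv rc.
have zeroC : (0:R)%:C = 0 by [].
have circ0 (t : R) : circ c r t != 0.
  apply/negP => /eqP z0.
  have : d <= nc (circ c r t - 0%:C) by case: hv => e; [rewrite -e; apply: hd | rewrite -e; apply: hd].
  by rewrite z0 zeroC subr0 nc0 => h; move: (lt_le_trans d0 h); rewrite ltxx.
set h := fun z : R[i] => if i == j then z^-1 else 0.
set f := fun z : R[i] => invmx (z%:M - M) i j.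
have ch : cc (cig c r h).
  rewrite /cig /h; case: (i == j).
    by apply: cc_mul; [apply: cc_inv => //; apply: cc_circ | apply: cc_dcirc].
  by apply: cc_mul; [apply: cc_cst | apply: cc_dcirc].
have cfh : cc (cig c r (fun z => f z - h z)).
  have -> : cig c r (fun z => f z - h z) = fun t => cig c r f t - cig c r h t.
    by apply: funext => t; rewrite /cig mulrBl.
  by apply: cc_sub => //; apply: cf.
have eP : riesz c r M i j = cint c r (fun z => h z + (f z - h z)).
  by rewrite mxE; apply: cint_ext => z; rewrite [RHS]addrC subrK.
rewrite eP cint_add //.
have -> : cint c r h = 0.
  rewrite /h; case: (i == j); first exact: cint_inv0'.
  exact: cint_zero.
rewrite add0r; apply: cint_bound; [exact: ltW | exact: cfh |] => t.
set z := circ c r t.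
have hDij : Dm v z i j = h z.
  rewrite /Dm /h !mxE; case: eqP => [e|_]; last by rewrite mulr0n.
  have vi0 : v i = 0 by case: hv => // ; rewrite e.
  by rewrite mulr1n vi0 zeroC subr0.
have e1 : 0 <= N * (d^-1 * b) by rewrite mulr_ge0 // ?ler0n // mulr_ge0.
have KR0 : 0 <= KR by rewrite /KR mulr_ge0 // mulr_ge0 // exprn_ge0 // ler0n.
case: hv => hv.
  have eR := resolvL (neq t) (hu t).
  rewrite /f -/M eR mxE hDij addrAC subrr add0r.
  apply: (mb_mul KR0 (mb_mul b0 (hDm t) hEb) (hR t)).
have eR := resolvR (neq t) (hu t).
rewrite /f -/M eR mxE hDij addrAC subrr add0r.
have -> : N * (N * (d^-1 * b) * KR) = N * (N * (KR * b) * d^-1) by ring.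
apply: (mb_mul dinv0 (mb_mul b0 (hR t) hEb) (hDm t)).
Qed.

End H.

End MH.
Import MH.

Module MI1.
Set Implicit Arguments. Unset Strict Implicit. Unset Printing Implicit Defensive.
Import Order.TTheory GRing.Theory Num.Theory.
Import numFieldNormedType.Exports.
Local Open Scope ring_scope.
Local Open Scope complex_scope.

Section I1.
Variable R : realType.

Lemma inv_le (x S : R) : 0 < x -> x^-1 <= S -> S^-1 <= x.
Proof.
move=> x0 h; have S0 : 0 < S by apply: lt_le_trans h; rewrite invr_gt0.
by rewrite -[x in _ <= x]invrK lef_pV2 // posrE invr_gt0.
Qed.

Lemma mnorm_le n (X : 'M[R[i]]_n) (B : R) : 0 <= B -> (forall i j, nc (X i j) <= B) ->
  mnorm X <= n%:R * B.
Proof.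
move=> B0 h; rewrite /mnorm.
have hN : 0 <= n%:R * B :> R by rewrite mulr_ge0 // ler0n.
rewrite -[X in _ <= X](ger0_norm hN) -sqrtr_sqr ler_sqrt ?sqr_ge0 //.
have -> : (n%:R * B) ^+ 2 = n%:R * (n%:R * (B ^+ 2)) :> R by ring.
apply: sum_le_const => i; apply: sum_le_const => j.
have := h i j; rewrite /nc => hij.
have e : complex.Re (X i j) ^+ 2 + complex.Im (X i j) ^+ 2 = (Num.sqrt (complex.Re (X i j) ^+ 2 + complex.Im (X i j) ^+ 2)) ^+ 2.
  by rewrite sqr_sqrtr // addr_ge0 // sqr_ge0.
rewrite e; apply: lerXn2r => //; rewrite ?nnegrE //; exact: sqrtr_ge0.
Qed.

Lemma ncRB (x y : R) : nc (x%:C - y%:C) = `|x - y|.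
Proof. by rewrite -ncR /= ; congr nc; rewrite /= ; apply/eqP; rewrite eq_complex /= !eqxx /= subr0. Qed.

Lemma padzP l m (bp : 'I_l -> R) (j : 'I_(l + m)) :
  (exists k, padz m bp j = bp k) \/ padz m bp j = 0.
Proof. by rewrite /padz; case: (fintype.split j) => k; [left; exists k | right]. Qed.

End I1.

End MI1.
Import MI1.

Theorem lemma3p4 (R : realType) (l m : nat) (ap : 'I_l -> R)
  (c1 c0 : R[i]) (r1 r0 : R) :
  (forall k, 0 < ap k) ->
  0 < r1 -> 0 < r0 ->
  (forall k, encloses c1 r1 (ap k)%:C) -> excludes c1 r1 0 ->
  encloses c0 r0 0 -> (forall k, excludes c0 r0 (ap k)%:C) ->
  exists eps : R, exists C : R, exists delta : R,
    0 < eps /\ 0 < delta /\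
    forall (bp : 'I_l -> R), (forall k, `|bp k - ap k| < eps) ->
    forall (E Z : 'M[R[i]]_(l + m)) (b : R),
      is_hermitian E -> hpsd Z ->
      (forall v : 'cV[R[i]]_(l + m), Lambda (padz m bp) *m (Z *m v) = 0) ->
      0 < b -> b <= delta -> mnorm E <= b -> mnorm Z <= b ->
      (forall z : R[i], `|z - c1| = r1%:C \/ `|z - c0| = r0%:C ->
         ~~ eigenvalue (Lambda (padz m bp) + E) z) ->
      let P1 := riesz c1 r1 (Lambda (padz m bp) + E) in
      let P0 := riesz c0 r0 (Lambda (padz m bp) + E) in
      mnorm (P1 *m Z *m P0) <= C * b ^+ 2 /\
      mnorm (P1 *m Z *m P1) <= C * b ^+ 3.
Proof.
move=> hap r1p r0p enc1 exc1 enc0 exc0.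
have e1 k : nc ((ap k)%:C - c1) < r1 by move: (enc1 k); rewrite /encloses normC_nc ltcR.
have x1 : r1 < nc c1 by move: exc1; rewrite /excludes normC_nc ltcR sub0r ncN.
have e0 : nc c0 < r0 by move: enc0; rewrite /encloses normC_nc ltcR sub0r ncN.
have x0 k : r0 < nc ((ap k)%:C - c0) by move: (exc0 k); rewrite /excludes normC_nc ltcR.
pose g1 k := r1 - nc ((ap k)%:C - c1).
pose g0 k := nc ((ap k)%:C - c0) - r0.
pose h1 := nc c1 - r1.
pose h0 := r0 - nc c0.
have g1p k : 0 < g1 k by rewrite /g1 subr_gt0.
have g0p k : 0 < g0 k by rewrite /g0 subr_gt0.
have h1p : 0 < h1 by rewrite /h1 subr_gt0.
have h0p : 0 < h0 by rewrite /h0 subr_gt0.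
pose T k := (g1 k)^-1 + (g0 k)^-1 + (ap k)^-1.
have ig1 k : 0 < (g1 k)^-1 by rewrite invr_gt0.
have ig0 k : 0 < (g0 k)^-1 by rewrite invr_gt0.
have iap k : 0 < (ap k)^-1 by rewrite invr_gt0.
have ih1 : 0 < h1^-1 by rewrite invr_gt0.
have ih0 : 0 < h0^-1 by rewrite invr_gt0.
have T0 k : 0 <= T k by rewrite /T; have := ig1 k; have := ig0 k; have := iap k; lra.
pose S := \sum_k T k + h1^-1 + h0^-1.
have Ssum0 : 0 <= \sum_k T k by apply: sumr_ge0 => k _.
have Sge k : T k <= S.
  apply: (le_trans (@elem_le_sum R l T k T0)); rewrite /S; lra.
pose d0 := S^-1.
have d0g1 k : d0 <= g1 k.
  apply: inv_le => //; apply: le_trans (Sge k); rewrite /T; have := ig0 k; have := iap k; lra.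
have d0g0 k : d0 <= g0 k.
  apply: inv_le => //; apply: le_trans (Sge k); rewrite /T; have := ig1 k; have := iap k; lra.
have d0ap k : d0 <= ap k.
  apply: inv_le => //; apply: le_trans (Sge k); rewrite /T; have := ig1 k; have := ig0 k; lra.
have d0h1 : d0 <= h1 by apply: inv_le => //; rewrite /S; lra.
have d0h0 : d0 <= h0 by apply: inv_le => //; rewrite /S; lra.
have d0p : 0 < d0 by rewrite invr_gt0 /S; lra.
pose d := d0 / 2.
pose N : R := (l + m)%:R.
have N0 : 0 <= N by rewrite ler0n.
pose KR := 2 * (N ^+ 2 * d^-1).
pose K1 := 2 * (r1 * (N * (N * d^-1 * KR))).
pose K0 := 2 * (r0 * KR).
pose delta := d / (2 * (N ^+ 4 + 1)).
have dp : 0 < d by rewrite /d; lra.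
have N4 : 0 <= N ^+ 4 by rewrite exprn_ge0.
have deltap : 0 < delta by rewrite /delta divr_gt0 //; lra.
have dinv0 : 0 <= d^-1 by rewrite invr_ge0 ltW.
have KR0 : 0 <= KR by rewrite /KR mulr_ge0 // mulr_ge0 // exprn_ge0.
have K10 : 0 <= K1 by rewrite /K1 !mulr_ge0 // ltW.
have K00 : 0 <= K0 by rewrite /K0 !mulr_ge0 // ltW.
exists d, (N * N * N * K1 * (K0 + K1)), delta.
split => //; split => //.
move=> bp hbp E Z b hE hZ hZl b0 bdel hEb hZb heig P1 P0.
have hb k : - d < bp k - ap k < d by rewrite -ltr_norml.
have bpp k : 0 < bp k.
  have := hb k; have := d0ap k; rewrite /d => ? /andP [? ?]; lra.
have z0 : (0:R)%:C = 0 by [].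
have dist1 t j : d <= nc (circ c1 r1 t - (padz m bp j)%:C).
  case: (padzP bp j) => [[k ->]|->].
    have A := nc_lb (circ c1 r1 t - c1) ((bp k)%:C - c1).
    rewrite (_ : circ c1 r1 t - c1 - ((bp k)%:C - c1) = circ c1 r1 t - (bp k)%:C) in A; last by ring.
    have B := ncD ((ap k)%:C - c1) ((bp k)%:C - (ap k)%:C).
    rewrite (_ : (ap k)%:C - c1 + ((bp k)%:C - (ap k)%:C) = (bp k)%:C - c1) in B; last by ring.
    rewrite ncRB in B.
    rewrite nc_circ in A; last exact: ltW.
    have := d0g1 k; have := hb k; rewrite /g1 /d => /andP [? ?] ?.
    have : `|bp k - ap k| < d0 / 2 by rewrite ltr_norml; apply/andP; split.
    lra.
  rewrite z0 subr0.
  have A := nc_lb c1 (c1 - circ c1 r1 t).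
  rewrite (_ : c1 - (c1 - circ c1 r1 t) = circ c1 r1 t) in A; last by ring.
  rewrite ncB nc_circ in A; last exact: ltW.
  have := d0h1; rewrite /h1 /d; lra.
have dist0 t j : d <= nc (circ c0 r0 t - (padz m bp j)%:C).
  case: (padzP bp j) => [[k ->]|->].
    have A := nc_lb ((bp k)%:C - c0) (circ c0 r0 t - c0).
    rewrite (_ : (bp k)%:C - c0 - (circ c0 r0 t - c0) = (bp k)%:C - circ c0 r0 t) in A; last by ring.
    rewrite [nc ((bp k)%:C - circ c0 r0 t)]ncB nc_circ in A; last exact: ltW.
    have B := nc_lb ((ap k)%:C - c0) ((ap k)%:C - (bp k)%:C).
    rewrite (_ : (ap k)%:C - c0 - ((ap k)%:C - (bp k)%:C) = (bp k)%:C - c0) in B; last by ring.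
    rewrite ncRB distrC in B.
    have := d0g0 k; have := hb k; rewrite /g0 /d => /andP [? ?] ?.
    have : `|bp k - ap k| < d0 / 2 by rewrite ltr_norml; apply/andP; split.
    lra.
  rewrite z0 subr0.
  have A := nc_lb (circ c0 r0 t - c0) (0 - c0).
  rewrite (_ : circ c0 r0 t - c0 - (0 - c0) = circ c0 r0 t) in A; last by ring.
  rewrite sub0r ncN nc_circ in A; last exact: ltW.
  have := d0h0; rewrite /h0 /d; lra.
have unit1 t : (circ c1 r1 t)%:M - (Lambda (padz m bp) + E) \in unitmx.
  by apply: unit_of_noteig; apply: heig; left; apply: circ_on; apply: ltW.
have unit0 t : (circ c0 r0 t)%:M - (Lambda (padz m bp) + E) \in unitmx.
  by apply: unit_of_noteig; apply: heig; right; apply: circ_on; apply: ltW.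
have hsmall : N ^+ 4 * b * d^-1 <= 1/2.
  have h1' : N ^+ 4 * b * d^-1 <= N ^+ 4 * delta * d^-1.
    by apply: ler_wpM2r => //; apply: ler_wpM2l.
  apply: le_trans h1' _.
  have -> : N ^+ 4 * delta * d^-1 = N ^+ 4 / (2 * (N ^+ 4 + 1)).
    rewrite /delta; field; apply/andP; split; last exact: lt0r_neq0.
    by apply: lt0r_neq0; lra.
  rewrite ler_pdivrMr; last lra.
  lra.
have [B1a B1b] := riesz_bounds r1p dp (ltW b0) hEb hsmall dist1 unit1.
have [B0a _] := riesz_bounds r0p dp (ltW b0) hEb hsmall dist0 unit0.
have hZm := mb_mnorm hZb.
have B1 i j : (padz m bp j = 0 \/ padz m bp i = 0) -> nc (P1 i j) <= K1 * b.
  move=> h; apply: le_trans (B1b i j h x1) _.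
  by rewrite le_eqVlt; apply/orP; left; apply/eqP; rewrite /K1 /KR; ring.
have B0 i j : nc (P0 i j) <= K0 by exact: B0a.
have Zrow i q : padz m bp i != 0 -> Z i q = 0.
  move=> nz; have := congr1 (fun A : 'cV[R[i]]_(l + m) => A i ord0) (hZl (delta_mx q ord0)).
  rewrite -colE mul_diag_mx !mxE => /eqP; rewrite mulf_eq0 => /orP [/eqP h|/eqP //].
  by move: (congr1 (@complex.Re R) h) => /= e; rewrite e eqxx in nz.
have Zcol i q : padz m bp q != 0 -> Z i q = 0.
  move=> nz; have hZ1 : ctrmx Z = Z := hZ.1.
  rewrite -[Z i q](congr1 (fun A : 'M[R[i]]_(l + m) => A i q) hZ1) mxE Zrow //.
  exact: conjc0.
have pnz j : padz m bp j != 0 \/ padz m bp j = 0.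
  case: (padzP bp j) => [[k ->]|->]; [left; apply: lt0r_neq0; apply: bpp | by right].
have Kb0 : 0 <= K1 * b * b by rewrite !mulr_ge0 // ltW.
have XZb i q : nc ((P1 *m Z) i q) <= N * (K1 * b * b).
  apply: mb_mulG => j; case: (pnz j) => [nz|e].
    by rewrite (Zrow j q nz) nc0 mulr0.
  apply: ler_pM; [exact: nc_ge0 | exact: nc_ge0 | by apply: B1; left | exact: hZm].
have XZ0 i q : padz m bp q != 0 -> (P1 *m Z) i q = 0.
  by move=> nz; rewrite mxE; apply: big1 => j _; rewrite Zcol // mulr0.
split.
  have Bn : 0 <= N * (N * (K1 * b * b) * K0) by rewrite !mulr_ge0 // ltW.
  apply: le_trans (mnorm_le Bn _) _.
    move=> i k; apply: mb_mulG => q; apply: ler_pM; [exact: nc_ge0 | exact: nc_ge0 | exact: XZb | exact: B0].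
  have -> : N * N * N * K1 * (K0 + K1) * b ^+ 2 = N * (N * (N * (K1 * b * b) * K0)) + N * N * N * K1 * K1 * b ^+ 2 by ring.
  have bp2 : 0 <= b ^+ 2 by apply: exprn_ge0; apply: ltW.
  by rewrite lerDl; do 5 (apply: mulr_ge0 => //).
have Bn : 0 <= N * (N * (K1 * b * b) * (K1 * b)) by rewrite !mulr_ge0 // ltW.
apply: le_trans (mnorm_le Bn _) _.
  move=> i k; apply: mb_mulG => q; case: (pnz q) => [nz|e].
    by rewrite (XZ0 i q nz) nc0 mul0r !mulr_ge0 // ltW.
  apply: ler_pM; [exact: nc_ge0 | exact: nc_ge0 | exact: XZb | by apply: B1; right].
have -> : N * N * N * K1 * (K0 + K1) * b ^+ 3 = N * (N * (N * (K1 * b * b) * (K1 * b))) + N * N * N * K1 * K0 * b ^+ 3 by ring.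
have bp3 : 0 <= b ^+ 3 by apply: exprn_ge0; apply: ltW.
by rewrite lerDl; do 5 (apply: mulr_ge0 => //).
Qed.
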